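(* Let $\mathsf{C}\subset V$ be a proper cone, $\phi$ in the interior of $\mathsf{C}^*$, $k\ge1$, and $K_\phi=\mathsf{C}\cap\phi^{-1}(1)$. If $\gamma_k^\phi$ is entanglement-breaking, then $K_\phi$ is a polytope.
   Context: Proper cone: closed convex cone in a finite-dimensional real vector space, containing no line, not contained in a hyperplane; $\mathsf{C}^*$ is its dual cone. $\otimes_{\min}$: $\mathsf{C}_1\otimes_{\min}\mathsf{C}_2=\mathrm{conv}\{x\otimes y:x\in\mathsf{C}_1,y\in\mathsf{C}_2\}$, iterated. The $k$th reduction map $\gamma_k^\phi=\frac1k\sum_{j=1}^k\phi^{\otimes(j-1)}\otimes\mathrm{Id}_V\otimes\phi^{\otimes(k-j)}:V^{\otimes k}\to V$ is viewed as a tensor in $(V^* )^{\otimes k}\otimes V$; it is entanglement-breaking if this tensor belongs to $(\mathsf{C}^* )^{\otimes_{\min}k}\otimes_{\min}\mathsf{C}$. *)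

(* Defs.v *)
(* V = R^n realised as row vectors 'rV[R]_n,
   V^dual identified with 'rV[R]_n through the standard pairing. *)
From HB Require Import structures.
From mathcomp Require Import all_boot all_order all_algebra.
From mathcomp Require Import all_classical all_reals all_analysis.
Set Implicit Arguments. Unset Strict Implicit. Unset Printing Implicit Defensive.
Import Order.TTheory GRing.Theory Num.Theory numFieldNormedType.Exports.
Local Open Scope classical_set_scope.
Local Open Scope ring_scope.

Section Defs.
Variable R : realType.
Variable n : nat.

Notation vec := 'rV[R]_n.

Definition pair (f x : vec) : R := \sum_(i < n) f 0 i * x 0 i.

Definition convex_cone (C : set vec) : Prop :=
  C 0 /\ (forall x y, C x -> C y -> C (x + y)) /\
  (forall (t : R) x, 0 <= t -> C x -> C (t *: x)).

(* proper cone: closed convex cone, containing no line,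
   not contained in a (linear) hyperplane *)
Definition proper_cone (C : set vec) : Prop :=
  [/\ closed C, convex_cone C,
      (forall x, C x -> C (- x) -> x = 0) &
      (forall w : vec, w != 0 -> exists2 x, C x & pair w x != 0)].

Definition dual_cone (C : set vec) : set vec :=
  [set f | forall x, C x -> 0 <= pair f x].

Definition conv_vec (A : set vec) : set vec :=
  [set x | exists N (lam : 'I_N -> R) (p : 'I_N -> vec),
     [/\ forall j, 0 <= lam j, \sum_(j < N) lam j = 1,
         forall j, A (p j) & x = \sum_(j < N) lam j *: p j]].

Definition polytope (P : set vec) : Prop :=
  exists s : seq vec, P = conv_vec [set x | x \in s].

Definition base (C : set vec) (phi : vec) : set vec :=
  [set x | C x /\ pair phi x = 1].

Variable k : nat.

(* tensors in (V^dual)^{⊗k} ⊗ V, in coordinates: the coefficient at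
   (i_1,...,i_k ; a) w.r.t. dual basis ⊗...⊗ dual basis ⊗ basis *)
Definition tens := ({ffun 'I_k -> 'I_n} * 'I_n)%type -> R.

Definition conv_tens (A : set tens) : set tens :=
  [set t | exists N (lam : 'I_N -> R) (p : 'I_N -> tens),
     [/\ forall j, 0 <= lam j, \sum_(j < N) lam j = 1,
         forall j, A (p j) & t = fun q => \sum_(j < N) lam j * p j q]].

Definition ptens (f : 'I_k -> vec) (v : vec) : tens :=
  fun q => (\prod_(l < k) f l 0 (q.1 l)) * v 0 q.2.

(* (C^dual)^{⊗min k} ⊗min C  (the iterated minimal tensor product) *)
Definition min_tens_cone (C : set vec) : set tens :=
  conv_tens [set t | exists (f : 'I_k -> vec) (v : vec),
     [/\ forall l, dual_cone C (f l), C v & t = ptens f v]].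

(* the k-th reduction map gamma_k^phi as a tensor in (V^dual)^{⊗k} ⊗ V:
   gamma(e_{i_1}⊗...⊗e_{i_k}) = 1/k sum_j (prod_{l<>j} phi(e_{i_l})) e_{i_j} *)
Definition gamma (phi : vec) : tens :=
  fun q => k%:R^-1 * \sum_(j < k)
     ((\prod_(l < k | l != j) phi 0 (q.1 l)) * (q.2 == q.1 j)%:R).

Definition entanglement_breaking (C : set vec) (phi : vec) : Prop :=
  min_tens_cone C (gamma phi).

End Defs.

(* Main.v *)
Require Import Defs.
From HB Require Import structures.
From mathcomp Require Import all_boot all_order all_algebra.
From mathcomp Require Import all_classical all_reals all_analysis.
From mathcomp Require Import ring.
Import Order.TTheory GRing.Theory Num.Theory numFieldNormedType.Exports.
Local Open Scope classical_set_scope.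
Local Open Scope ring_scope.

Section H.
Variable R : realType.
Variable n : nat.
Implicit Types (f x y : 'rV[R]_n).

Lemma pairC f x : pair f x = pair x f.
Proof. by apply: eq_bigr => i _; rewrite mulrC. Qed.

Lemma pairD f x y : pair f (x + y) = pair f x + pair f y.
Proof. by rewrite /pair -big_split; apply: eq_bigr => i _; rewrite mxE mulrDr. Qed.

Lemma pairZ f (a : R) x : pair f (a *: x) = a * pair f x.
Proof. by rewrite /pair mulr_sumr; apply: eq_bigr => i _; rewrite mxE mulrCA. Qed.

Lemma pair0 f : pair f 0 = 0.
Proof. by rewrite /pair big1 // => i _; rewrite mxE mulr0. Qed.

Lemma pairN f x : pair f (- x) = - pair f x.
Proof. by rewrite -scaleN1r pairZ mulN1r. Qed.

Lemma pair_sum I (r : seq I) (P : pred I) (F : I -> 'rV[R]_n) f :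
  pair f (\sum_(i <- r | P i) F i) = \sum_(i <- r | P i) pair f (F i).
Proof. exact: (big_morph (pair f) (pairD f) (pair0 f)). Qed.

Lemma pair_self_ge0 x : 0 <= pair x x.
Proof. by apply: sumr_ge0 => i _; rewrite -expr2 sqr_ge0. Qed.

Lemma pair_self_eq0 x : pair x x = 0 -> x = 0.
Proof.
move=> h; apply/matrixP => i j; rewrite (ord1 i) mxE.
rewrite /pair in h.
move: h; under eq_bigr do rewrite -expr2.
move=> h; have := psumr_eq0P (fun i _ => (sqr_ge0 (x 0 i))) h (i:=j) isT.
by move/eqP; rewrite sqrf_eq0 => /eqP.
Qed.

Lemma int_zero (C : set 'rV[R]_n) phi v :
  (dual_cone C)° phi -> C v -> pair phi v = 0 -> v = 0.
Proof.
move=> /nbhs_ballP [e /= e0 He] Cv pv0.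
set t := e / (2 * (`|v| + 1)).
have v1 : 0 < `|v| + 1 by rewrite ltr_wpDl.
have t0 : 0 < t by rewrite divr_gt0 // mulr_gt0.
have : ball phi e (phi - t *: v).
  rewrite -ball_normE /= opprB addrC subrK normrZ gtr0_norm //.
  apply: (@le_lt_trans _ _ (t * (`|v| + 1))).
    by rewrite ler_wpM2l ?ltW // ltrDl ltr01.
  rewrite /t invfM mulrA -mulrA mulVf ?gt_eqF // mulr1.
  by rewrite ltr_pdivrMr ?ltr0n // ltr_pMr // ltr1n.
move=> /He /(_ v Cv).
rewrite pairC pairD pairN pairZ (pairC v phi) pv0 add0r oppr_ge0.
move=> h; apply: pair_self_eq0; apply/eqP; rewrite eq_le pair_self_ge0 andbT.
by rewrite -(pmulr_rle0 _ t0).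
Qed.
Variable k : nat.
Definition E (t : tens R n k) (x : 'rV[R]_n) (a : 'I_n) : R :=
  \sum_(i : {ffun 'I_k -> 'I_n}) t (i, a) * \prod_(l < k) x 0 (i l).

Lemma E_ptens (f : 'I_k -> 'rV[R]_n) (v x : 'rV[R]_n) (a : 'I_n) :
  E (ptens f v) x a = (\prod_(l < k) pair (f l) x) * v 0 a.
Proof.
rewrite /E /pair bigA_distr_bigA /= mulr_suml; apply: eq_bigr => i _.
by rewrite /ptens /= big_split /= mulrAC.
Qed.

Lemma E_conv N (lam : 'I_N -> R) (p : 'I_N -> tens R n k) x a :
  E (fun q => \sum_(j < N) lam j * p j q) x a = \sum_(j < N) lam j * E (p j) x a.
Proof.
rewrite /E; under eq_bigr do rewrite mulr_suml.
rewrite exchange_big; apply: eq_bigr => j _; rewrite mulr_sumr.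
by apply: eq_bigr => i _; rewrite mulrA.
Qed.

Lemma E_gamma phi x a : (1 <= k)%N -> pair phi x = 1 -> E (@gamma R n k phi) x a = x 0 a.
Proof.
move=> k1 px.
pose G (j l : 'I_k) (m : 'I_n) := if l == j then (a == m)%:R * x 0 m else phi 0 m * x 0 m.
have step : forall (j : 'I_k) (i : {ffun 'I_k -> 'I_n}),
  (\prod_(l < k | l != j) phi 0 (i l) * (a == i j)%:R) * \prod_(l < k) x 0 (i l)
  = \prod_(l < k) G j l (i l).
  move=> j i; rewrite [X in _ * X](bigD1 j) //= [RHS](bigD1 j) //= /G eqxx.
  rewrite [in RHS](eq_bigr (fun l => phi 0 (i l) * x 0 (i l))); last first.
    by move=> l /negbTE ->.
  rewrite big_split /=; ring.
rewrite /E /gamma.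
under eq_bigr do rewrite -mulrA mulr_suml.
rewrite -mulr_sumr exchange_big /=.
under eq_bigr => j _ do under eq_bigr => i _ do rewrite step.
under eq_bigr => j _ do rewrite -(bigA_distr_bigA (G j)) (bigD1 j) //=.
have h1 : forall j : 'I_k, \sum_(m < n) G j j m = x 0 a.
  move=> j; rewrite /G eqxx (bigD1 a) //= eqxx mul1r big1 ?addr0 //.
  by move=> m; rewrite eq_sym => /negbTE ->; rewrite mul0r.
have h2 : forall j : 'I_k, \prod_(l | l != j) \sum_(m < n) G j l m = 1.
  move=> j; rewrite big1 // => l /negbTE lj; rewrite /G lj; exact: px.
under eq_bigr => j _ do rewrite h1 h2 mulr1.
have kn : k%:R != 0 :> R by rewrite pnatr_eq0 -lt0n.
by rewrite sumr_const card_ord -mulr_natr; field.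
Qed.
End H.

Theorem lemma3 (R : realType) (n : nat) (C : set 'rV[R]_n) (phi : 'rV[R]_n)
  (k : nat) :
  proper_cone C -> (dual_cone C)° phi -> (1 <= k)%N ->
  entanglement_breaking k C phi ->
  polytope (base C phi).
Proof.
move=> [clC [C0 [CD CZ]] Cpt Cfull] phiint k1 [N [lam [p [lam0 lam1 Ap gam]]]].
have phiC : dual_cone C phi := interior_subset phiint.
have : forall j, exists fv : ('I_k -> 'rV[R]_n) * 'rV[R]_n,
    [/\ forall l, dual_cone C (fv.1 l), C fv.2 & p j = ptens fv.1 fv.2].
  by move=> j; have [f [v [H1 H2 H3]]] := Ap j; exists (f, v).
move=> /choice [FV HFV].
pose V j := (FV j).2; pose F j := (FV j).1.
pose c j := pair phi (V j).
have c0 : forall j, 0 <= c j by move=> j; apply: phiC; have [] := HFV j.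
have CV : forall j, C (V j) by move=> j; have [] := HFV j.
exists [seq (c j)^-1 *: V j | j <- enum 'I_N & c j != 0].
apply/seteqP; split.
- move=> x [Cx px].
  pose mu j := lam j * \prod_(l < k) pair (F j l) x.
  have mu0 : forall j, 0 <= mu j.
    move=> j; apply: mulr_ge0 => //; apply: prodr_ge0 => l _.
    by have [H1 _ _] := HFV j; apply: H1.
  have xe : x = \sum_j mu j *: V j.
    apply/matrixP => i a; rewrite (ord1 i) -(@E_gamma R n k phi x a k1 px) gam E_conv.
    rewrite summxE; apply: eq_bigr => j _.
    have [_ _ ->] := HFV j.
    by rewrite E_ptens mxE mulrA.
  have [j0 cj0] : exists j0, c j0 != 0.
    apply/not_existsP => hall.
    have : x = 0.
      rewrite xe big1 // => j _.
      have -> : V j = 0.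
        apply: (@int_zero _ _ C phi (V j) phiint (CV j)); apply/eqP; apply: contraT => h; case: (hall j h).
      by rewrite scaler0.
    by move=> x0; move: px; rewrite x0 pair0 => /eqP; rewrite eq_sym oner_eq0.
  exists N, (fun j => mu j * c j),
    (fun j => if c j != 0 then (c j)^-1 *: V j else (c j0)^-1 *: V j0).
  split.
  + by move=> j; apply: mulr_ge0.
  + rewrite -px [in RHS]xe pair_sum; apply: eq_bigr => j _.
    by rewrite pairZ.
  + move=> j /=; case: ifP => h; apply/mapP.
      by exists j => //; rewrite mem_filter h mem_enum.
    by exists j0 => //; rewrite mem_filter cj0 mem_enum.
  + rewrite [LHS]xe; apply: eq_bigr => j _.
    case: ifP => h.
      by rewrite scalerA mulfK.
    have -> : V j = 0.
      by apply: (@int_zero _ _ C phi (V j) phiint (CV j)); apply/eqP; rewrite -[_ == _]negbK h.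
    by rewrite (eqP (negbFE h)) mulr0 scale0r scaler0.
- move=> y [M [l [q [l0 l1 qs ye]]]].
  have qb : forall j, C (q j) /\ pair phi (q j) = 1.
    move=> j; have /mapP [j' ] := qs j.
    rewrite mem_filter => /andP [cj' _] ->.
    split; first by apply: CZ => //; rewrite invr_ge0.
    by rewrite pairZ mulVf.
  split.
    rewrite ye; elim/big_ind: _ => //.
    by move=> j _; apply: CZ => //; have [] := qb j.
  rewrite ye pair_sum -l1; apply: eq_bigr => j _.
  by rewrite pairZ (proj2 (qb j)) mulr1.
Qed.
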